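(* Let $\chi$ and $\zeta$ be two splitting maps on $\mathcal H$ with $\zeta\sqsubseteq\chi$. Then (1) $\mathrm{loc}(\zeta)\subseteq\mathrm{loc}(\chi)$ and (2) $\mathrm{stloc}(\zeta)\subseteq\mathrm{stloc}(\chi)$.
   Context: All Hilbert spaces are finite-dimensional and complex. A splitting map on $\mathcal H$ is an isometry $\chi:\mathcal H\to\mathcal H_L^\chi\otimes\mathcal H_R^\chi$. $A\in\mathcal L(\mathcal H)$ is $\chi$-local if $A=\chi^\dagger(\tilde A\otimes\mathbb 1)\chi$ for some $\tilde A\in\mathcal L(\mathcal H_L^\chi)$; $\mathrm{loc}(\chi)$ is the set of these. $A$ is strictly $\chi$-local if there exists $\tilde A\in\mathcal L(\mathcal H_L^\chi)$ with $A\chi^\dagger=\chi^\dagger(\tilde A\otimes\mathbb 1)$ and $\chi A=(\tilde A\otimes\mathbb 1)\chi$; $\mathrm{stloc}(\chi)$ is the set of these. Comprehension: $\zeta\sqsubseteq\chi$ if there exist a Hilbert space $\mathcal H_M$ and isometries $\bullet:\mathcal H_R^\zeta\to\mathcal H_M\otimes\mathcal H_R^\chi$ and $\circ:\mathcal H_L^\chi\to\mathcal H_L^\zeta\otimes\mathcal H_M$ with $(\mathbb 1_{\mathcal H_L^\zeta}\otimes\bullet)\zeta=(\circ\otimes\mathbb 1_{\mathcal H_R^\chi})\chi$. *)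

(* Defs.v *)
(* Finite-dimensional complex Hilbert spaces are modelled as
   column spaces C^n over a numClosedFieldType C (e.g. the complex numbers);
   linear maps C^n -> C^m are matrices 'M[C]_(m, n) acting on columns. *)
From mathcomp Require Import all_boot all_order all_algebra.
From mathcomp Require Export mxtens.
Set Implicit Arguments. Unset Strict Implicit. Unset Printing Implicit Defensive.
Import GRing.Theory Num.Theory.
Local Open Scope ring_scope.

Section Defs.
Variable C : numClosedFieldType.

Definition adj {m n : nat} (A : 'M[C]_(m, n)) : 'M[C]_(n, m) :=
  (map_mx Num.conj A)^T.

Definition isometry {m n : nat} (V : 'M[C]_(m, n)) : Prop :=
  adj V *m V = 1%:M.

(* A splitting map on C^n: an isometry chi : C^n -> C^a (x) C^b, where the
   tensor product C^a (x) C^b is C^(a*b) with the Kronecker convention of tensmx. *)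
Definition splitting_map {n a b : nat} (chi : 'M[C]_(a * b, n)) : Prop :=
  isometry chi.

Definition loc {n a b : nat} (chi : 'M[C]_(a * b, n)) (A : 'M[C]_n) : Prop :=
  exists At : 'M[C]_a, A = adj chi *m (At *t (1%:M : 'M[C]_b)) *m chi.

Definition stloc {n a b : nat} (chi : 'M[C]_(a * b, n)) (A : 'M[C]_n) : Prop :=
  exists At : 'M[C]_a,
    A *m adj chi = adj chi *m (At *t (1%:M : 'M[C]_b)) /\
    chi *m A = (At *t (1%:M : 'M[C]_b)) *m chi.

(* Comprehension zeta [= chi: there are H_M = C^k and isometries
   bul : H_R^zeta -> H_M (x) H_R^chi and circ : H_L^chi -> H_L^zeta (x) H_M with
   (1 (x) bul) zeta = (circ (x) 1) chi, modulo the canonical associativity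
   identification C^(az*(k*bc)) = C^((az*k)*bc). *)
Definition comprehends {n az bz ac bc : nat}
  (zeta : 'M[C]_(az * bz, n)) (chi : 'M[C]_(ac * bc, n)) : Prop :=
  exists (k : nat) (bul : 'M[C]_(k * bc, bz)) (circ : 'M[C]_(az * k, ac)),
    isometry bul /\ isometry circ /\
    castmx (mulnA az k bc, erefl n) (((1%:M : 'M[C]_az) *t bul) *m zeta)
    = (circ *t (1%:M : 'M[C]_bc)) *m chi.

End Defs.

(* Main.v *)
Require Import Defs.
From mathcomp Require Import all_boot all_order all_algebra.
From mathcomp Require Import mxtens.
Import GRing.Theory Num.Theory.
Local Open Scope ring_scope.

Section Helpers.
Variable C : numClosedFieldType.

Lemma adjM m n p (A : 'M[C]_(m, n)) (B : 'M[C]_(n, p)) :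
  adj (A *m B) = adj B *m adj A.
Proof. by rewrite /adj map_mxM trmx_mul. Qed.

Lemma adjT m n p q (A : 'M[C]_(m, n)) (B : 'M[C]_(p, q)) :
  adj (A *t B) = adj A *t adj B.
Proof. by rewrite /adj (map_mxT (Num.conj : {rmorphism C -> C})) trmx_tens. Qed.

Lemma adj1 m : adj (1%:M : 'M[C]_m) = 1%:M.
Proof. by rewrite /adj (map_mx1 (Num.conj : {rmorphism C -> C})) trmx1. Qed.

Lemma adjK m n (A : 'M[C]_(m, n)) : adj (adj A) = A.
Proof. by apply/matrixP=> i j; rewrite !mxE conjCK. Qed.

Lemma tens11 m p : (1%:M : 'M[C]_m) *t (1%:M : 'M[C]_p) = 1%:M.
Proof.
apply/matrixP=> i j.
case: (mxtens_indexP i)=> i0 i1; case: (mxtens_indexP j)=> j0 j1.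
rewrite tensmxE !mxE (inj_eq (can_inj (@mxtens_indexK _ _))) xpair_eqE.
by case: (i0 == j0); case: (i1 == j1); rewrite /= ?mulr1 ?mulr0 ?mul0r.
Qed.

Lemma tensmxA m n p q r s (A : 'M[C]_(m, n)) (B : 'M[C]_(p, q)) (D : 'M[C]_(r, s)) :
  castmx (mulnA m p r, mulnA n q s) (A *t (B *t D)) = (A *t B) *t D.
Proof.
apply/matrixP=> i j.
case: (mxtens_indexP i)=> i' i2; case: (mxtens_indexP i')=> i0 i1.
case: (mxtens_indexP j)=> j' j2; case: (mxtens_indexP j')=> j0 j1.
rewrite castmxE /=.
have -> : cast_ord (esym (mulnA m p r))
   (mxtens_index (mxtens_index (i0, i1), i2)) = mxtens_index (i0, mxtens_index (i1, i2)).
  by apply: val_inj => /=; rewrite mulnDl -mulnA addnA.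
have -> : cast_ord (esym (mulnA n q s))
   (mxtens_index (mxtens_index (j0, j1), j2)) = mxtens_index (j0, mxtens_index (j1, j2)).
  by apply: val_inj => /=; rewrite mulnDl -mulnA addnA.
by rewrite !tensmxE mulrA.
Qed.

Lemma L1 m m' k p (e : m = m') (G : 'M[C]_(m, k)) (Y : 'M[C]_(k, p)) :
  castmx (e, erefl k) G *m Y = castmx (e, erefl p) (G *m Y).
Proof. by case: m' / e. Qed.

Lemma L1' m m' p (e : m = m') (G : 'M[C]_m) (Y : 'M[C]_(m, p)) :
  castmx (e, e) G *m castmx (e, erefl p) Y = castmx (e, erefl p) (G *m Y).
Proof. by case: m' / e. Qed.

Lemma adj_cast m m' p (e : m = m') (Y : 'M[C]_(m, p)) :
  adj (castmx (e, erefl p) Y) = castmx (erefl p, e) (adj Y).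
Proof. by case: m' / e. Qed.

Lemma L3 m m' p (e : m = m') (X : 'M[C]_(p, m)) (G : 'M[C]_m) :
  castmx (erefl p, e) X *m castmx (e, e) G = castmx (erefl p, e) (X *m G).
Proof. by case: m' / e. Qed.

Lemma L4 m m' p q (e : m = m') (X : 'M[C]_(p, m)) (Y : 'M[C]_(m, q)) :
  castmx (erefl p, e) X *m castmx (e, erefl q) Y = X *m Y.
Proof. by case: m' / e. Qed.

Lemma L5 m m' p q (e : m = m') (X : 'M[C]_(p, q)) (Y : 'M[C]_(q, m)) :
  X *m castmx (erefl q, e) Y = castmx (erefl p, e) (X *m Y).
Proof. by case: m' / e. Qed.

End Helpers.

Theorem mainTheorem9 (C : numClosedFieldType) (n az bz ac bc : nat)
  (zeta : 'M[C]_(az * bz, n)) (chi : 'M[C]_(ac * bc, n)) :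
  splitting_map chi -> splitting_map zeta -> comprehends zeta chi ->
  (forall A : 'M[C]_n, loc zeta A -> loc chi A) /\
  (forall A : 'M[C]_n, stloc zeta A -> stloc chi A).
Proof.
move=> _ _ [k [bul [circ [Ib [Ic E]]]]].
set e := mulnA az k bc.
set W := (1%:M : 'M[C]_az) *t bul.
set V := circ *t (1%:M : 'M[C]_bc).
set Z := castmx (e, erefl n) (W *m zeta).
have EZ : Z = V *m chi by [].
have F1 : adj V *m V = 1%:M.
  by rewrite /V adjT adj1 tensmx_mul Ic mulmx1 tens11.
have F2 : forall At : 'M[C]_az,
    adj W *m (At *t (1%:M : 'M[C]_(k * bc))) *m W = At *t (1%:M : 'M[C]_bz).
  by move=> At; rewrite /W adjT adj1 !tensmx_mul mul1mx mulmx1 mulmx1 Ib.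
have F3 : forall At : 'M[C]_az,
    W *m (At *t (1%:M : 'M[C]_bz)) = (At *t (1%:M : 'M[C]_(k * bc))) *m W.
  by move=> At; rewrite /W !tensmx_mul mul1mx mulmx1 mul1mx mulmx1.
have F3' : forall At : 'M[C]_az,
    (At *t (1%:M : 'M[C]_bz)) *m adj W = adj W *m (At *t (1%:M : 'M[C]_(k * bc))).
  by move=> At; rewrite /W adjT adj1 !tensmx_mul mul1mx mulmx1 mul1mx mulmx1.
have F4 : forall At : 'M[C]_az,
    castmx (e, e) (At *t (1%:M : 'M[C]_(k * bc))) = (At *t (1%:M : 'M[C]_k)) *t (1%:M : 'M[C]_bc).
  by move=> At; rewrite -tens11 tensmxA.
have F5 : forall At : 'M[C]_az,
    adj V *m ((At *t (1%:M : 'M[C]_k)) *t (1%:M : 'M[C]_bc)) *m V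
    = (adj circ *m (At *t (1%:M : 'M[C]_k)) *m circ) *t (1%:M : 'M[C]_bc).
  by move=> At; rewrite /V adjT adj1 !tensmx_mul !mulmx1.
split.
  move=> A [At ->].
  exists (adj circ *m (At *t (1%:M : 'M[C]_k)) *m circ).
  rewrite -F5 -F2.
  have -> : adj chi *m (adj V *m ((At *t 1%:M) *t 1%:M) *m V) *m chi
      = adj Z *m ((At *t (1%:M : 'M[C]_k)) *t (1%:M : 'M[C]_bc)) *m Z.
    by rewrite EZ adjM !mulmxA.
  rewrite -F4 /Z adj_cast L3 L4 adjM !mulmxA //.
move=> A [At [H1 H2]].
exists (adj circ *m (At *t (1%:M : 'M[C]_k)) *m circ).
have Echi : chi = adj V *m Z by rewrite EZ mulmxA F1 mul1mx.
have EchiA : adj chi = adj Z *m V by rewrite {1}Echi adjM adjK.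
split.
  rewrite -F5.
  have -> : adj chi *m (adj V *m ((At *t 1%:M) *t 1%:M) *m V)
      = adj Z *m ((At *t (1%:M : 'M[C]_k)) *t (1%:M : 'M[C]_bc)) *m V.
    by rewrite EZ adjM !mulmxA.
  rewrite EchiA mulmxA; congr (_ *m V).
  rewrite -F4 /Z adj_cast L3 L5 adjM mulmxA H1 -mulmxA F3' mulmxA //.
rewrite -F5 -!mulmxA -EZ {1}Echi -mulmxA; congr (_ *m _).
rewrite /Z L1 -mulmxA H2 mulmxA F3 -mulmxA -L1' F4 //.
Qed.
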